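(* Consider the Best-or-Worst secretary problem with $n\ge1$ candidates. Then there exists an integer $r(n)$ with $0\le r(n)\le n$ such that the following strategy is optimal (maximizes the probability of success among all strategies): reject the first $r(n)$ interviewed candidates; after that, accept the first candidate which is either better than all the preceding candidates or worse than all the preceding candidates.
   Context: Setting (secretary-type problem): $n$ candidates have distinct qualities (a strict total order) and are interviewed one at a time in uniformly random order (all $n!$ orders equally likely). After the $k$-th interview, the interviewer knows only the relative ranks of the first $k$ candidates among themselves and must immediately and irrevocably either accept the $k$-th candidate (stopping the process) or reject it; rejected candidates cannot be recalled. A strategy is a rule that makes this decision at each step using only the relative ranks observed so far (it may end up accepting nobody). In the Best-or-Worst problem, the strategy succeeds if the accepted candidate is either the overall best or the overall worst of all $n$ candidates (the two outcomes are equally valued); a strategy is optimal if it maximizes the probability of success. *)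

(* Defs.v *)
From mathcomp Require Import all_boot all_order all_fingroup all_algebra.
Set Implicit Arguments. Unset Strict Implicit. Unset Printing Implicit Defensive.
Import GRing.Theory Num.Theory.

(* An interview order with qualities: sigma k = quality of the candidate
   interviewed at (0-based) step k; qualities are 0 (worst) .. n-1 (best).
   A uniformly random sigma : {perm 'I_n} models the uniformly random order. *)

Definition relrank n (sigma : {perm 'I_n}) (k : nat) (i : 'I_n) : nat :=
  #|[pred j : 'I_n | (j < k) && (sigma j < sigma i)]|.

(* The information available after the k-th interview: the sequence of the
   relative ranks of the first k candidates among themselves. *)
Definition pattern n (sigma : {perm 'I_n}) (k : nat) : seq nat :=
  map (relrank sigma k) (filter (fun i : 'I_n => (i < k)%N) (enum 'I_n)).

(* A (deterministic) strategy: after the k-th interview, given the observed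
   relative ranks of the first k candidates (a sequence of length k), decide
   whether to accept (true) the k-th candidate. *)
Definition strategy := seq nat -> bool.

Definition success n (s : strategy) (sigma : {perm 'I_n}) : bool :=
  [exists k : 'I_n,
     [&& s (pattern sigma k.+1),
         [forall j : 'I_n, (j < k) ==> ~~ s (pattern sigma j.+1)] &
         (val (sigma k) == 0) || (val (sigma k) == n.-1)]].

Definition success_prob n (s : strategy) : rat :=
  ((#|[set sigma : {perm 'I_n} | success s sigma]|)%:R / (n`!)%:R)%R.

Definition threshold (r : nat) : strategy := fun p =>
  (r < size p) && ((last 0 p == 0) || (last 0 p == (size p).-1)).

(* Main.v *)
Require Import Defs.
From mathcomp Require Import all_boot all_order all_fingroup all_algebra.
From mathcomp Require Import zify.
From mathcomp Require Import lra ring.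
Import Order.TTheory.
Import GRing.Theory Num.Theory.
Set Implicit Arguments. Unset Strict Implicit. Unset Printing Implicit Defensive.

Lemma card_count (T : finType) (p : pred T) : #|[pred x | p x]| = count p (enum T).
Proof. rewrite cardE /enum_mem size_filter filter_predT. by apply: eq_count. Qed.

Lemma count_ord n (p : pred nat) : count (fun j : 'I_n => p j) (enum 'I_n) = count p (iota 0 n).
Proof. by rewrite -val_enum_ord count_map. Qed.

Lemma count_iota_lt m n (p : pred nat) : m <= n ->
  count (fun j => (j < m) && p j) (iota 0 n) = count p (iota 0 m).
Proof.
move=> hmn; rewrite -(subnKC hmn) iotaD count_cat add0n.
rewrite (@eq_in_count _ _ p (iota 0 m)); last first.
  by move=> j; rewrite mem_iota add0n => /andP[_ ->].
rewrite (@eq_in_count _ _ pred0 (iota m _)); first by rewrite count_pred0 addn0.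
by move=> j; rewrite mem_iota => /andP[hj _]; rewrite ltnNge hj.
Qed.

Definition sv n (s : {perm 'I_n}) (i : nat) : nat :=
  oapp (fun j : 'I_n => val (s j)) 0 (insub i).
Lemma svE n (s : {perm 'I_n}) (j : 'I_n) : sv s j = s j.
Proof. by rewrite /sv valK. Qed.
Lemma sv_lt n (s : {perm 'I_n}) i : i < n -> sv s i < n.
Proof. by move=> hi; rewrite -[i]/(val (Ordinal hi)) svE. Qed.
Definition ltp n (s : {perm 'I_n}) i j := sv s i < sv s j.

Definition patR (m : nat) (R : nat -> nat -> bool) : seq nat :=
  [seq count (fun j => R j i) (iota 0 m) | i <- iota 0 m].

Lemma relrankE n (s : {perm 'I_n}) m (i : 'I_n) : m <= n ->
  relrank s m i = count (fun j => ltp s j i) (iota 0 m).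
Proof.
move=> hm; rewrite /relrank card_count.
rewrite (@eq_count _ _ (fun j : 'I_n => (j < m) && ltp s j i)); last first.
  by move=> j /=; rewrite /ltp !svE.
by rewrite (count_ord n (fun j => (j < m) && ltp s j i)) count_iota_lt.
Qed.

Lemma patternE n (s : {perm 'I_n}) m : m <= n -> pattern s m = patR m (ltp s).
Proof.
move=> hm; rewrite /pattern /patR.
rewrite (@eq_map _ _ _ (fun i : 'I_n => count (fun j => ltp s j i) (iota 0 m))); last first.
  by move=> i; rewrite relrankE.
pose G := fun i : nat => count (fun j => ltp s j i) (iota 0 m).
have -> : map (fun i : 'I_n => count (fun j => ltp s j i) (iota 0 m)) (filter (fun i : 'I_n => i < m) (enum 'I_n))
   = map G (map val (filter (fun i : 'I_n => i < m) (enum 'I_n))) by rewrite -map_comp.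
congr map.
have -> : map val (filter (fun i : 'I_n => i < m) (enum 'I_n)) = filter (fun i => i < m) (map val (enum 'I_n)).
  by rewrite filter_map.
rewrite val_enum_ord.
by have := filter_iota_ltn 0 hm; rewrite add0n.
Qed.

Section Ext.
Variable n : nat.
Implicit Types (s : {perm 'I_n}) (v : 'I_n.+1).

Definition extf s v (i : 'I_n.+1) : 'I_n.+1 :=
  if unlift ord_max i is Some j then lift v (s j) else v.

Lemma extf_inj s v : injective (extf s v).
Proof.
move=> i1 i2; rewrite /extf.
case: unliftP => [j1 ->|->]; case: unliftP => [j2 ->|->] //.
- by move/lift_inj/perm_inj => ->.
- by move=> E; have := neq_lift v (s j1); rewrite E eqxx.
- by move=> E; have := neq_lift v (s j2); rewrite -E eqxx.
Qed.

Definition ext s v : {perm 'I_n.+1} := perm (@extf_inj s v).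

Lemma ext_lift s v (j : 'I_n) : ext s v (lift ord_max j) = lift v (s j).
Proof. by rewrite permE /extf liftK. Qed.

Lemma ext_max s v : ext s v ord_max = v.
Proof. by rewrite permE /extf unlift_none. Qed.

Lemma sv_ext_lt s v i : i < n -> sv (ext s v) i = bump v (sv s i).
Proof.
move=> hi.
have E : i = val (lift ord_max (Ordinal hi)).
  by rewrite /= /bump leqNgt hi.
by rewrite {1}E svE ext_lift -[i]/(val (Ordinal hi)) svE.
Qed.

Lemma sv_ext_top s v : sv (ext s v) n = v.
Proof. by rewrite -[n]/(val (@ord_max n)) svE ext_max. Qed.

Lemma ltp_ext s v i j : i < n -> j < n -> ltp (ext s v) i j = ltp s i j.
Proof.
move=> hi hj; rewrite /ltp !sv_ext_lt //.
by rewrite !ltnNge leq_bump2.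
Qed.

Lemma ext_pair_inj : injective (fun p : {perm 'I_n} * 'I_n.+1 => ext p.1 p.2).
Proof.
move=> [s1 v1] [s2 v2] /= E.
have ev : v1 = v2 by rewrite -(ext_max s1 v1) -(ext_max s2 v2) E.
subst v2; congr pair.
apply/permP => j; apply: (@lift_inj _ v1).
by rewrite -!ext_lift E.
Qed.

Lemma ext_pair_bij : bijective (fun p : {perm 'I_n} * 'I_n.+1 => ext p.1 p.2).
Proof.
apply: inj_card_bij; first exact: ext_pair_inj.
by rewrite card_prod !card_Sn card_ord factS mulnC.
Qed.

End Ext.

Definition cnt n (P : pred {perm 'I_n}) : nat := \sum_(s : {perm 'I_n}) (P s : nat).

Lemma cnt_decomp n (P : pred {perm 'I_n.+1}) :
  cnt P = \sum_(v : 'I_n.+1) cnt (fun s => P (ext s v)).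
Proof.
rewrite /cnt (reindex (fun p : {perm 'I_n} * 'I_n.+1 => ext p.1 p.2)); last first.
  by apply: onW_bij; exact: ext_pair_bij.
rewrite exchange_big pair_big /=.
by apply: eq_big => // -[].
Qed.

Definition inv m (e : (nat -> nat -> bool) -> bool) :=
  forall R R', (forall i j, i < m -> j < m -> R i j = R' i j) -> e R = e R'.

Lemma inv_mono m m' e : m <= m' -> inv m e -> inv m' e.
Proof.
move=> hm he R R' h; apply: he => i j hi hj; apply: h.
- exact: leq_trans hi hm.
- exact: leq_trans hj hm.
Qed.

Lemma inv_ext n m e (s : {perm 'I_n}) v : m <= n -> inv m e ->
  e (ltp (ext s v)) = e (ltp s).
Proof.
move=> hm he; apply: he => i j hi hj; apply: ltp_ext.
- exact: leq_trans hi hm.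
- exact: leq_trans hj hm.
Qed.

Definition xR k (R : nat -> nat -> bool) := count (fun j => R j k) (iota 0 k).

Lemma xR_agree k R R' : (forall i j, i < k.+1 -> j < k.+1 -> R i j = R' i j) ->
  xR k R = xR k R'.
Proof.
move=> h; apply: eq_in_count => j; rewrite mem_iota add0n => /andP[_ hj].
by apply: h; [exact: ltnW|].
Qed.

Lemma xR_ext n k (s : {perm 'I_n}) v : k < n -> xR k (ltp (ext s v)) = xR k (ltp s).
Proof.
move=> hk; apply: xR_agree => i j hi hj; apply: ltp_ext.
- exact: leq_trans hi hk.
- exact: leq_trans hj hk.
Qed.

Lemma card_lt n (c : nat) : c <= n -> #|[pred a : 'I_n | a < c]| = c.
Proof.
move=> hc; rewrite card_count (count_ord n (fun a => a < c)).
have h := count_iota_lt xpredT hc; rewrite count_predT size_iota in h.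
by apply: etrans h; apply: eq_count => j; rewrite andbT.
Qed.

Lemma xR_top n (s : {perm 'I_n.+1}) : xR n (ltp s) = sv s n.
Proof.
have [g _ gK] := ext_pair_bij n.
rewrite -(gK s); set p := g s; case: p => s' v /=.
rewrite sv_ext_top /xR.
rewrite (@eq_in_count _ _ (fun j => sv s' j < v)); last first.
  move=> j; rewrite mem_iota add0n => /andP[_ hj].
  rewrite /ltp sv_ext_top sv_ext_lt // /bump.
  by case: (leqP v (sv s' j)) => h; lia.
rewrite -(count_ord n (fun j => sv s' j < v)).
rewrite (@eq_count _ _ (fun j : 'I_n => s' j < v)); last by move=> j; rewrite svE.
rewrite -card_count.
have -> : #|[pred j : 'I_n | s' j < v]| = #|s' @^-1: [set a : 'I_n | a < v]|.
  by apply: eq_card => j; rewrite !inE.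
rewrite card_preimset; last exact: perm_inj.
have -> : #|[set a : 'I_n | a < v]| = #|[pred a : 'I_n | a < v]| by apply: eq_card => j; rewrite inE.
by rewrite card_lt // -ltnS.
Qed.

Lemma cnt_eq n (P Q : pred {perm 'I_n}) : (forall s, P s = Q s) -> cnt P = cnt Q.
Proof. by move=> h; apply: eq_bigr => s _; rewrite h. Qed.

Lemma sum_ind n (p : pred 'I_n) X : \sum_(v : 'I_n) (p v * X) = #|[pred v | p v]| * X.
Proof.
rewrite -big_distrl /=; congr (_ * _).
rewrite -sum1_card [RHS]big_mkcond /=; apply: eq_bigr => v _.
by rewrite inE; case: (p v).
Qed.

Lemma sum_const n X : \sum_(v : 'I_n) X = n * X.
Proof. by rewrite big_const_ord iter_addn_0 mulnC. Qed.

Lemma card_ltn n : #|[pred v : 'I_n.+1 | v < n]| = n.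
Proof. exact: card_lt. Qed.

Lemma card_gt0 n : #|[pred v : 'I_n.+1 | 0 < v]| = n.
Proof.
rewrite card_count (count_ord n.+1 (fun v => 0 < v)) /= add0n.
rewrite (@eq_in_count _ _ xpredT); first by rewrite count_predT size_iota.
by move=> j; rewrite mem_iota => /andP[h _].
Qed.

Lemma card_eq n c : c < n -> #|[pred v : 'I_n | val v == c]| = 1.
Proof.
move=> hc; rewrite card_count (count_ord n (fun v => v == c)).
rewrite (@eq_count _ _ (pred1 c)) // count_uniq_mem ?iota_uniq //.
by rewrite mem_iota add0n hc.
Qed.

Lemma cnt_ext_inv n m e : m <= n -> inv m e ->
  cnt (fun s : {perm 'I_n.+1} => e (ltp s)) = n.+1 * cnt (fun s : {perm 'I_n} => e (ltp s)).
Proof.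
move=> hm he; rewrite cnt_decomp -sum_const; apply: eq_bigr => v _.
by apply: cnt_eq => s; rewrite (inv_ext _ _ hm he).
Qed.

Lemma F2 n k c e : k < n -> c <= k -> inv k e ->
  k.+1 * cnt (fun s : {perm 'I_n} => e (ltp s) && (xR k (ltp s) == c))
  = cnt (fun s : {perm 'I_n} => e (ltp s)).
Proof.
elim: n k => [//|n IH] k hk hc he.
have hkn : k <= n by rewrite -ltnS.
rewrite (cnt_ext_inv hkn he).
have [ekn|ltkn] := eqVneq k n.
- subst k; rewrite cnt_decomp.
  rewrite (@eq_bigr _ _ _ _ _ _ _ (fun v : 'I_n.+1 => (val v == c) * cnt (fun s : {perm 'I_n} => e (ltp s)))); last first.
    move=> v _; rewrite /cnt big_distrr /=.
    apply: eq_bigr => s _.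
    rewrite xR_top sv_ext_top (inv_ext _ _ (leqnn _) he).
    by case: (e _); case: (_ == c).
  by rewrite sum_ind card_eq ?mul1n // ltnS.
- have hk' : k < n by rewrite ltn_neqAle ltkn -ltnS.
  rewrite cnt_decomp.
  rewrite (@eq_bigr _ _ _ _ _ _ _ (fun v : 'I_n.+1 => cnt (fun s : {perm 'I_n} => e (ltp s) && (xR k (ltp s) == c)))); last first.
    move=> v _; apply: cnt_eq => s.
    by rewrite xR_ext // (inv_ext _ _ (ltnW hk') he).
  by rewrite sum_const mulnCA IH.
Qed.

Lemma bump_eq_top n v a : a < n -> v <= n -> (bump v a == n) = (a == n.-1) && (v < n).
Proof. by move=> ha hv; rewrite /bump; case: (leqP v a) => h /=; lia. Qed.

Lemma bump_eq0 v a : (bump v a == 0) = (a == 0) && (0 < v).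
Proof. by rewrite /bump; case: (leqP v a) => h /=; lia. Qed.

Lemma F1max n k e : k < n -> inv k.+1 e ->
  n * cnt (fun s : {perm 'I_n} => e (ltp s) && (sv s k == n.-1))
  = k.+1 * cnt (fun s : {perm 'I_n} => e (ltp s) && (xR k (ltp s) == k)).
Proof.
elim: n k => [//|n IH] k hk he.
have [ekn|ltkn] := eqVneq k n.
- subst k; congr (_ * _); apply: cnt_eq => s; by rewrite xR_top.
- have hk' : k < n by rewrite ltn_neqAle ltkn -ltnS.
  rewrite !cnt_decomp.
  rewrite (@eq_bigr _ _ _ _ _ _ _ (fun v : 'I_n.+1 => (v < n) * cnt (fun s : {perm 'I_n} => e (ltp s) && (sv s k == n.-1)))); last first.
    move=> v _; rewrite /cnt big_distrr /=; apply: eq_bigr => s _.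
    rewrite sv_ext_lt // (inv_ext _ _ hk' he) bump_eq_top ?sv_lt //; last by rewrite -ltnS.
    by case: (e _); case: (_ == _); case: (v < n).
  rewrite sum_ind card_ltn.
  rewrite (@eq_bigr _ _ _ _ _ _ _ (fun v : 'I_n.+1 => cnt (fun s : {perm 'I_n} => e (ltp s) && (xR k (ltp s) == k)))); last first.
    move=> v _; apply: cnt_eq => s.
    by rewrite xR_ext // (inv_ext _ _ hk' he).
  by rewrite sum_const IH // mulnCA.
Qed.

Lemma F1min n k e : k < n -> inv k.+1 e ->
  n * cnt (fun s : {perm 'I_n} => e (ltp s) && (sv s k == 0))
  = k.+1 * cnt (fun s : {perm 'I_n} => e (ltp s) && (xR k (ltp s) == 0)).
Proof.
elim: n k => [//|n IH] k hk he.
have [ekn|ltkn] := eqVneq k n.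
- subst k; congr (_ * _); apply: cnt_eq => s; by rewrite xR_top.
- have hk' : k < n by rewrite ltn_neqAle ltkn -ltnS.
  rewrite !cnt_decomp.
  rewrite (@eq_bigr _ _ _ _ _ _ _ (fun v : 'I_n.+1 => (0 < v) * cnt (fun s : {perm 'I_n} => e (ltp s) && (sv s k == 0)))); last first.
    move=> v _; rewrite /cnt big_distrr /=; apply: eq_bigr => s _.
    rewrite sv_ext_lt // (inv_ext _ _ hk' he) bump_eq0.
    by case: (e _); case: (_ == _); case: (0 < v).
  rewrite sum_ind card_gt0.
  rewrite (@eq_bigr _ _ _ _ _ _ _ (fun v : 'I_n.+1 => cnt (fun s : {perm 'I_n} => e (ltp s) && (xR k (ltp s) == 0)))); last first.
    move=> v _; apply: cnt_eq => s.
    by rewrite xR_ext // (inv_ext _ _ hk' he).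
  by rewrite sum_const IH // mulnCA.
Qed.

Lemma patR_agree m R R' : (forall i j, i < m -> j < m -> R i j = R' i j) ->
  patR m R = patR m R'.
Proof.
move=> h; apply/eq_in_map => i; rewrite mem_iota add0n => /andP[_ hi].
apply: eq_in_count => j; rewrite mem_iota add0n => /andP[_ hj]; exact: h.
Qed.

Definition beforeR (st : strategy) k (R : nat -> nat -> bool) :=
  all (fun j => ~~ st (patR j.+1 R)) (iota 0 k).
Definition stopR (st : strategy) k R := beforeR st k R && st (patR k.+1 R).
Definition AR k R := (xR k R == 0) || (xR k R == k).

Lemma beforeR_inv st k : inv k (beforeR st k).
Proof.
move=> R R' h; apply: eq_in_all => j; rewrite mem_iota add0n => /andP[_ hj].
congr (~~ st _); apply: patR_agree => i l hi hl; apply: h.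
- exact: leq_trans hi hj.
- exact: leq_trans hl hj.
Qed.

Lemma stopR_inv st k : inv k.+1 (stopR st k).
Proof.
move=> R R' h; rewrite /stopR.
have -> : beforeR st k R = beforeR st k R'.
  by apply: beforeR_inv => i j hi hj; apply: h; apply: ltnW.
by rewrite (patR_agree h).
Qed.

Lemma beforeRS st k R : beforeR st k.+1 R = beforeR st k R && ~~ st (patR k.+1 R).
Proof. by rewrite /beforeR -{1}addn1 iotaD all_cat add0n /= andbT. Qed.

Lemma stop_excl st k k' R : k < k' -> stopR st k R -> stopR st k' R -> False.
Proof.
move=> hk /andP[_ hs] /andP[hb _].
by move/allP: hb => /(_ k); rewrite mem_iota add0n hk hs => /(_ isT).
Qed.

Lemma successE n st (s : {perm 'I_n}) :
  success st s = [exists k : 'I_n, stopR st k (ltp s) && ((sv s k == 0) || (sv s k == n.-1))].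
Proof.
apply: eq_existsb => k; rewrite /stopR !svE patternE //.
have -> : [forall j : 'I_n, (j < k) ==> ~~ st (pattern s j.+1)] = beforeR st k (ltp s).
  apply/forallP/allP => [h j | h j].
  - rewrite mem_iota add0n => /andP[_ hj].
    have hjn : j < n := ltn_trans hj (ltn_ord k).
    by have := h (Ordinal hjn); rewrite /= hj /= patternE.
  - apply/implyP => hj; rewrite patternE; last exact: ltn_ord j.
    by apply: h; rewrite mem_iota add0n.
by case: (beforeR _ _ _); case: (st _).
Qed.

Lemma exists_sum n (b : 'I_n -> bool) :
  (forall i j, i != j -> b i -> b j -> False) ->
  ([exists k, b k] : nat) = \sum_k (b k : nat).
Proof.
move=> hx; case: (boolP [exists k, b k]) => [/existsP [k hk] | /existsPn h].
- rewrite (bigD1 k) //= hk big1 // => j hj; apply/eqP; rewrite eqb0; apply/negP => bj.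
  by apply: (hx j k).
- by rewrite big1 // => j _; rewrite (negbTE (h j)).
Qed.

Definition W n st := cnt (fun s : {perm 'I_n} => success st s).

Lemma W_sum n st : W n st =
  \sum_(k < n) cnt (fun s : {perm 'I_n} => stopR st k (ltp s) && ((sv s k == 0) || (sv s k == n.-1))).
Proof.
rewrite /W /cnt exchange_big /=; apply: eq_bigr => s _.
rewrite successE exists_sum // => i j hij /andP[hi _] /andP[hj _].
case: (ltngtP i j) => h.
- exact: stop_excl h hi hj.
- exact: stop_excl h hj hi.
- by move: hij; rewrite (val_inj h) eqxx.
Qed.

Lemma cnt_or n (P Q1 Q2 : pred {perm 'I_n}) : (forall s, Q1 s -> Q2 s -> False) ->
  cnt (fun s => P s && (Q1 s || Q2 s)) = cnt (fun s => P s && Q1 s) + cnt (fun s => P s && Q2 s).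
Proof.
move=> h; rewrite /cnt -big_split /=; apply: eq_bigr => s _.
case: (P s) (Q1 s) (Q2 s) (h s) => [] [] [] //= H; exfalso; exact: H.
Qed.

Lemma cnt_le n (P Q : pred {perm 'I_n}) : (forall s, P s -> Q s) -> cnt P <= cnt Q.
Proof.
move=> h; apply: leq_sum => s _; case: (boolP (P s)) => [/h -> //|_]; exact: leq0n.
Qed.

Lemma xR0 R : xR 0 R = 0. Proof. by []. Qed.

Definition wt n k := if k == 0 then (if n == 1 then 1 else 2) else k.+1.

Lemma term_eq n st k : k < n ->
  n * cnt (fun s : {perm 'I_n} => stopR st k (ltp s) && ((sv s k == 0) || (sv s k == n.-1)))
  = wt n k * cnt (fun s : {perm 'I_n} => stopR st k (ltp s) && AR k (ltp s)).
Proof.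
move=> hk.
have hmin := F1min hk (@stopR_inv st k).
have hmax := F1max hk (@stopR_inv st k).
have [n1|n1] := eqVneq n 1.
- subst n; have k0 : k = 0 by case: k hk {hmin hmax} => [|[]].
  subst k; rewrite /wt /= mul1n.
  rewrite (@cnt_eq _ _ (fun s : {perm 'I_1} => stopR st 0 (ltp s) && (sv s 0 == 0))); last first.
    by move=> s; rewrite orbb.
  rewrite (mul1n (cnt _)) in hmin; rewrite hmin mul1n; apply: cnt_eq => s.
  by rewrite /AR xR0.
- rewrite cnt_or; last first.
    by move=> s /eqP -> /eqP h; lia.
  rewrite mulnDr hmin hmax -mulnDr.
  have [k0|kn0] := eqVneq k 0.
  + clear hmin hmax; subst k; rewrite /wt /= (negbTE n1).
    have E1 : forall X : nat -> nat -> bool, cnt (fun s : {perm 'I_n} => stopR st 0 (ltp s) && (xR 0 (ltp s) == 0))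
       = cnt (fun s : {perm 'I_n} => stopR st 0 (ltp s)).
      by move=> _; apply: cnt_eq => s; rewrite /xR /= andbT.
    have E2 : cnt (fun s : {perm 'I_n} => stopR st 0 (ltp s) && AR 0 (ltp s))
       = cnt (fun s : {perm 'I_n} => stopR st 0 (ltp s)).
      by apply: cnt_eq => s; rewrite /AR /xR /= andbT.
    by rewrite E2 mul1n addnn -mul2n.
  + rewrite /wt (negbTE kn0) cnt_or //.
    move=> s /eqP -> /eqP h; by move: kn0; rewrite -h eqxx.
Qed.

Definition Pk n st k := cnt (fun s : {perm 'I_n} => stopR st k (ltp s) && AR k (ltp s)).
Definition Qk n st k := cnt (fun s : {perm 'I_n} => beforeR st k (ltp s)).

Lemma nW n st : n * W n st = \sum_(k < n) wt n k * Pk n st k.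
Proof.
rewrite W_sum big_distrr /=; apply: eq_bigr => k _; exact: term_eq.
Qed.

Lemma Q0 n st : Qk n st 0 = n`!.
Proof.
rewrite /Qk /cnt /beforeR /= -(card_Sn n) -sum1_card.
by apply: eq_bigr.
Qed.

Lemma QS n st k : Qk n st k = Qk n st k.+1 + cnt (fun s : {perm 'I_n} => stopR st k (ltp s)).
Proof.
rewrite /Qk /cnt -big_split /=; apply: eq_bigr => s _.
rewrite beforeRS /stopR; by case: (beforeR _ _ _); case: (st _).
Qed.

Lemma P_le_stop n st k : Pk n st k <= cnt (fun s : {perm 'I_n} => stopR st k (ltp s)).
Proof. by apply: cnt_le => s /andP[]. Qed.

Definition BA n st k := cnt (fun s : {perm 'I_n} => beforeR st k (ltp s) && AR k (ltp s)).

Lemma P_le_BA n st k : Pk n st k <= BA n st k.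
Proof. by apply: cnt_le => s /andP[/andP[-> _] ->]. Qed.

Lemma BA0 n st : BA n st 0 = Qk n st 0.
Proof. by apply: cnt_eq => s; rewrite /AR /xR /beforeR /=. Qed.

Lemma BAS n st k : 0 < k -> k < n -> k.+1 * BA n st k = 2 * Qk n st k.
Proof.
move=> k0 hk; rewrite /BA cnt_or; last first.
  by move=> s /eqP -> /eqP h; move: k0; rewrite -h.
rewrite mulnDr (F2 _ _ (@beforeR_inv st k)) // (F2 _ _ (@beforeR_inv st k)) //.
by rewrite addnn -muln2 mulnC.
Qed.

Lemma patR_last k R : last 0 (patR k.+1 R) = count (fun j => R j k) (iota 0 k.+1).
Proof.
have E : iota 0 k.+1 = iota 0 k ++ [:: k] by rewrite -addn1 iotaD.
by rewrite /patR; set f := (fun i => _); rewrite [in LHS]E map_cat last_cat.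
Qed.

Lemma stop_thr r k R : (forall i, R i i = false) ->
  stopR (threshold r) k R = beforeR (threshold r) k R && (r <= k) && AR k R.
Proof.
move=> hR; rewrite /stopR -andbA; congr (_ && _).
rewrite /threshold size_map size_iota ltnS patR_last /AR /xR.
have E : iota 0 k.+1 = iota 0 k ++ [:: k] by rewrite -addn1 iotaD.
by rewrite E count_cat /= hR !addn0.
Qed.

Lemma ltp_irr n (s : {perm 'I_n}) i : ltp s i i = false.
Proof. by rewrite /ltp ltnn. Qed.

Lemma P_thr n r k : Pk n (threshold r) k = (r <= k) * BA n (threshold r) k.
Proof.
rewrite /Pk /BA /cnt big_distrr /=; apply: eq_bigr => s _.
rewrite stop_thr; last exact: ltp_irr.
by case: (beforeR _ _ _); case: (r <= k); case: (AR _ _).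
Qed.

Lemma stop_thr_P n r k : cnt (fun s : {perm 'I_n} => stopR (threshold r) k (ltp s)) = Pk n (threshold r) k.
Proof.
apply: cnt_eq => s; rewrite stop_thr; last exact: ltp_irr.
by case: (beforeR _ _ _); case: (r <= k); case: (AR _ _).
Qed.

Section LP.
Local Open Scope ring_scope.
Variables (n : nat) (a w : nat -> rat).

Fixpoint Vf (m : nat) : rat :=
  match m with
  | 0 => 0
  | m'.+1 => let k := (n - m'.+1)%N in Num.max (Vf m') (a k * w k + (1 - a k) * Vf m')
  end.
Definition vv k := Vf (n - k).

Lemma vv_n : vv n = 0.
Proof. by rewrite /vv subnn. Qed.

Lemma vvS k : (k < n)%N -> vv k = Num.max (vv k.+1) (a k * w k + (1 - a k) * vv k.+1).
Proof.
move=> hk; rewrite /vv -(subnSK hk) /=.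
by rewrite subnSK // subKn // ltnW.
Qed.

Lemma Vf_ge0 m : 0 <= Vf m.
Proof. by elim: m => [|m IH] //=; rewrite le_max IH. Qed.

Lemma vv_ge0 k : 0 <= vv k.
Proof. exact: Vf_ge0. Qed.

Lemma vv_step k : (k < n)%N -> vv k.+1 <= vv k.
Proof. by move=> hk; rewrite (vvS hk) le_max lexx. Qed.

Lemma vv_anti i j : (i <= j)%N -> (j <= n)%N -> vv j <= vv i.
Proof.
move=> hij; elim: j hij => [|j IH] hij hjn.
- by rewrite leqn0 in hij; rewrite (eqP hij).
- case: (ltngtP i j.+1) hij => // [hlt _|-> _]; last exact: lexx.
  apply: le_trans (IH _ (ltnW hjn)); last by rewrite -ltnS.
  exact: vv_step.
Qed.

Variables P Q : nat -> rat.

Lemma LP_bound :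
  (forall k, (k < n)%N -> 0 <= P k /\ P k <= a k * Q k) ->
  (forall k, (k < n)%N -> Q k.+1 <= Q k - P k) ->
  (forall k, (k <= n)%N -> 0 <= Q k) ->
  forall k, (k <= n)%N -> \sum_(k <= j < n) w j * P j <= vv k * Q k.
Proof.
move=> hP hQ hQ0.
suff H : forall m k, (k + m)%N = n -> \sum_(k <= j < n) w j * P j <= vv k * Q k.
  by move=> k hk; apply: (H (n - k)%N); rewrite subnKC.
elim=> [|m IH] k hkm.
- by rewrite addn0 in hkm; subst k; rewrite big_geq // vv_n mul0r.
- have hk : (k < n)%N by rewrite -hkm addnS ltnS leq_addr.
  rewrite big_ltn //.
  have hk1 : (k.+1 + m)%N = n by rewrite addSnnS.
  have := IH k.+1 hk1.
  have [hP0 hPa] := hP k hk.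
  have hQk := hQ k hk.
  have hQ0k := hQ0 k (ltnW hk).
  have hv0 := vv_ge0 k.+1.
  rewrite (vvS hk).
  set v1 := vv k.+1; set M := Num.max _ _ => hS.
  have h1 : v1 * Q k.+1 <= v1 * (Q k - P k) by rewrite ler_wpM2l.
  have hM1 : v1 <= M by rewrite le_max lexx.
  have hM2 : a k * w k + (1 - a k) * v1 <= M by rewrite le_max lexx orbT.
  have h2 : v1 * Q k <= M * Q k by rewrite ler_wpM2r.
  have h3 : (a k * w k + (1 - a k) * v1) * Q k <= M * Q k by rewrite ler_wpM2r.
  case: (lerP (w k) v1) => hw.
  + have h4 : (w k - v1) * P k <= 0 by rewrite mulr_le0_ge0 // subr_le0.
    lra.
  + have h4 : (w k - v1) * P k <= (w k - v1) * (a k * Q k) by rewrite ler_wpM2l // subr_ge0 ltW.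
    lra.
Qed.

Lemma LP_eq r :
  (forall k, 0 <= a k) ->
  (forall k, (k < n)%N -> P k = if (r <= k)%N then a k * Q k else 0) ->
  (forall k, (k < n)%N -> Q k.+1 = Q k - P k) ->
  (forall j, (j < n)%N -> (j < r)%N -> w j <= vv j.+1) ->
  (forall j, (j < n)%N -> (r <= j)%N -> vv j.+1 <= w j) ->
  forall k, (k <= n)%N -> \sum_(k <= j < n) w j * P j = vv k * Q k.
Proof.
move=> ha hP hQ hlo hhi.
suff H : forall m k, (k + m)%N = n -> \sum_(k <= j < n) w j * P j = vv k * Q k.
  by move=> k hk; apply: (H (n - k)%N); rewrite subnKC.
elim=> [|m IH] k hkm.
- by rewrite addn0 in hkm; subst k; rewrite big_geq // vv_n mul0r.
- have hk : (k < n)%N by rewrite -hkm addnS ltnS leq_addr.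
  rewrite big_ltn // IH; last by rewrite addSnnS.
  rewrite (vvS hk) hQ // hP //.
  have hak := ha k.
  case: (leqP r k) => hrk.
  + have hw := hhi k hk hrk.
    rewrite max_r.
      lra.
    have : 0 <= a k * (w k - vv k.+1) by rewrite mulr_ge0 // subr_ge0.
    lra.
  + have hw := hlo k hk hrk.
    rewrite max_l.
      lra.
    have : a k * (w k - vv k.+1) <= 0 by rewrite mulr_ge0_le0 // subr_le0.
    lra.
Qed.

End LP.

Local Open Scope ring_scope.

Definition aR (k : nat) : rat := if k == 0%N then 1 else 2%:R / (k.+1)%:R.

Lemma aR_ge0 k : 0 <= aR k.
Proof. by rewrite /aR; case: (k == 0%N) => //; rewrite divr_ge0 ?ler0n. Qed.

Lemma BA_rat n st k : (k < n)%N -> (BA n st k)%:R = aR k * (Qk n st k)%:R.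
Proof.
move=> hk; rewrite /aR; have [->|k0] := eqVneq k 0%N.
  by rewrite BA0 mul1r.
have k0' : (0 < k)%N by rewrite lt0n.
have E := BAS st k0' hk.
have hk0 : ((k.+1)%:R : rat) != 0 by rewrite pnatr_eq0.
apply: (mulfI hk0); rewrite -natrM E natrM.
field; by rewrite -natr1 addrC in hk0.
Qed.

Definition wR n k : rat := (wt n k)%:R.

Lemma wt_mono n i j : (i <= j)%N -> (wt n i <= wt n j)%N.
Proof.
rewrite /wt; case: (eqVneq i 0%N) => [->|i0]; case: (eqVneq j 0%N) => [->|j0] //=.
- by move=> _; case: (n == 1%N); case: j j0 => [|[]].
- by rewrite leqn0 (negbTE i0).
Qed.

Lemma nW_rat n st : (n%:R * (W n st)%:R : rat) =
  \sum_(0 <= j < n) wR n j * (Pk n st j)%:R.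
Proof.
rewrite -natrM nW big_mkord natr_sum; apply: eq_bigr => k _.
by rewrite natrM.
Qed.

Lemma bound n st : (0 < n)%N ->
  (n%:R * (W n st)%:R : rat) <= vv n aR (wR n) 0 * (n`!)%:R.
Proof.
move=> hn; rewrite nW_rat -(Q0 n st).
apply: (@LP_bound n aR (wR n) (fun j => (Pk n st j)%:R) (fun j => (Qk n st j)%:R)) => //.
- move=> k hk; split; first exact: ler0n.
  by rewrite -BA_rat // ler_nat P_le_BA.
- move=> k hk; rewrite (QS n st k) natrD.
  have := P_le_stop n st k; rewrite -(ler_nat rat) => h.
  lra.
Qed.

Lemma thr_eq n r : (0 < n)%N ->
  (forall j, (j < n)%N -> (j < r)%N -> wR n j <= vv n aR (wR n) j.+1) ->
  (forall j, (j < n)%N -> (r <= j)%N -> vv n aR (wR n) j.+1 <= wR n j) ->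
  (n%:R * (W n (threshold r))%:R : rat) = vv n aR (wR n) 0 * (n`!)%:R.
Proof.
move=> hn hlo hhi; rewrite nW_rat -(Q0 n (threshold r)).
apply: (@LP_eq n aR (wR n) (fun j => (Pk n (threshold r) j)%:R) (fun j => (Qk n (threshold r) j)%:R) r) => //.
- exact: aR_ge0.
- move=> k hk; rewrite P_thr natrM BA_rat //.
  by case: (r <= k)%N; rewrite ?mul1r ?mul0r.
- move=> k hk; rewrite (QS n (threshold r) k) stop_thr_P natrD.
  lra.
Qed.

Lemma cardW n st : #|[set s : {perm 'I_n} | success st s]| = W n st.
Proof.
rewrite /W /cnt -sum1_card [LHS]big_mkcond /=; apply: eq_bigr => s _.
by rewrite inE; case: (success st s).
Qed.

Theorem theorem1 (n : nat) (hn : (0 < n)%N) :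
  exists r : nat, (r <= n)%N /\
    forall s : strategy, success_prob n s <= success_prob n (threshold r).
Proof.
pose v := vv n aR (wR n).
pose r := find (fun j => v j.+1 <= wR n j) (iota 0 n).
have hr : (r <= n)%N by have := find_size (fun j => v j.+1 <= wR n j) (iota 0 n); rewrite size_iota.
exists r; split => // st.
have hlo : forall j, (j < n)%N -> (j < r)%N -> wR n j <= v j.+1.
  move=> j hj hjr; have := before_find 0%N hjr; rewrite nth_iota // add0n => h.
  by move/negbT: h; rewrite -ltNge => /ltW.
have hhi : forall j, (j < n)%N -> (r <= j)%N -> v j.+1 <= wR n j.
  move=> j hj hrj.
  have hrn : (r < n)%N := leq_ltn_trans hrj hj.
  have hhas : has (fun j => v j.+1 <= wR n j) (iota 0 n).
    by rewrite has_find size_iota.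
  have := nth_find 0%N hhas; rewrite -/r nth_iota // add0n => h.
  have h1 : v j.+1 <= v r.+1 by apply: vv_anti.
  apply: le_trans h1 _; apply: le_trans h _; by rewrite /wR ler_nat wt_mono.
have Hs := bound st hn.
have Ht := thr_eq hn hlo hhi.
have hle : ((W n st)%:R : rat) <= (W n (threshold r))%:R.
  by rewrite -(@ler_pM2l _ n%:R) ?ltr0n // Ht.
rewrite /success_prob !cardW ler_pM2r ?invr_gt0 ?ltr0n ?fact_gt0 //.
Qed.
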